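(* Let $G$ be a network as described in the context and consider (BBMG) on $G$ with coefficients $a_i>0$, $b_i\in\mathbb{R}\setminus\{0\}$, $d_i\in\mathbb{R}$. If there exists a non-constant travelling wave solution $u$ of (BBMG) with all speeds $c_i>0$, then no ramification vertex of $G$ is a sink or a source.
   Context: A network $G$ is obtained from a non-empty, simple, connected, at most countable, locally finite graph by realizing each edge $\mathsf{e}_j$ ($j\in\mathbf{E}\subset\mathbb{N}$) as the image of a $\mathcal{C}^2$ Jordan curve $\pi_j:[0,\ell_j]\to\mathbb{R}^m$ with arc-length parameter $x_j\in[0,\ell_j]$; two distinct edges meet at most in one common vertex. For a vertex $\mathsf{v}$, $N(\mathsf{v})$ is the set of indices of edges incident to $\mathsf{v}$; $V_r$ is the set of vertices of degree $\ge2$ (ramification vertices). Incidence numbers: $\iota_{ij}=1$ if $\pi_j(\ell_j)=\mathsf{v}_i$ (edge incoming at $\mathsf{v}_i$), $\iota_{ij}=-1$ if $\pi_j(0)=\mathsf{v}_i$ (edge outgoing at $\mathsf{v}_i$), $\iota_{ij}=0$ otherwise. A vertex is a sink if all its incident edges are incoming, a source if all are outgoing. For $u$ on $G$, $u_j(x_j,t)=u(\pi_j(x_j),t)$, $\partial_j=\partial/\partial x_j$, and $u_j(t,\mathsf{v}_i)$, $\partial_ju_j(t,\mathsf{v}_i)$ are values at $x_j=\pi_j^{-1}(\mathsf{v}_i)$. (BBMG): $\partial_t u_i - a_i\partial_i^2\partial_t u_i + b_i u_i\partial_i u_i + d_i\partial_i u_i=0$ on each $\mathsf{e}_i$, $t>0$;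 for each $\mathsf{v}_p\in V_r$ and $t\ge0$: $u_j(t,\mathsf{v}_p)=u_k(t,\mathsf{v}_p)$ for $j,k\in N(\mathsf{v}_p)$, and $\sum_j\iota_{pj}a_j\partial_ju_j(t,\mathsf{v}_p)=0$. No initial or boundary-vertex conditions. A strong solution is a function $u$ continuous on $G$ with $u_i\in\mathcal{C}^{1,1}(\mathsf{e}_i\times[0,\infty))$, $\partial_tu_i\in\mathcal{C}^{2,0}(\mathsf{e}_i\times[0,\infty))$, satisfying (BBMG) pointwise. A travelling wave is a strong solution with speeds $c_i\ge0$ and $\varphi_i\in\mathcal{C}^3(\mathbb{R})$ such that $u_i(x_i,t)=\varphi_i(x_i-c_it)$ for all $x_i\in\mathsf{e}_i$, $t\ge0$. *)

(* Defs.v *)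
From Stdlib Require Import Reals List Classical ClassicalEpsilon.
From Coquelicot Require Import Coquelicot.
Open Scope R_scope.

Definition xm (P : Prop) : {P} + {~ P} :=
  match excluded_middle_informative P with
  | left p => left p | right q => right q end.

(** * Networks (abstracted to their metric-graph data)
    Edges are indexed by natural numbers j with [isE j] (E ⊂ ℕ);
    edge j is parametrized by arc length x_j ∈ [0, len j],
    with initial vertex [tl j] = π_j(0) and terminal vertex [hd j] = π_j(ℓ_j). *)

Definition incident {V : Type} (isE : nat -> Prop) (tl hd : nat -> V) (v : V) (j : nat) : Prop :=
  isE j /\ (tl j = v \/ hd j = v).

Definition adjacent {V : Type} (isE : nat -> Prop) (tl hd : nat -> V) (v w : V) : Prop :=
  exists j, isE j /\ ((tl j = v /\ hd j = w) \/ (hd j = v /\ tl j = w)).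

Inductive reach {V : Type} (isE : nat -> Prop) (tl hd : nat -> V) (v : V) : V -> Prop :=
  | reach_refl : reach isE tl hd v v
  | reach_step : forall w w', reach isE tl hd v w -> adjacent isE tl hd w w' ->
                 reach isE tl hd v w'.

Record Network (V : Type) := {
  isE : nat -> Prop;
  tl : nat -> V;
  hd : nat -> V;
  len : nat -> R;
  len_pos : forall j, isE j -> 0 < len j;
  (* Jordan curves: the two endpoints of an edge are distinct *)
  no_loop : forall j, isE j -> tl j <> hd j;
  simple : forall j k, isE j -> isE k -> j <> k ->
     ~ ((tl j = tl k /\ hd j = hd k) \/ (tl j = hd k /\ hd j = tl k));
  nonempty : inhabited V;
  countable : exists f : V -> nat, forall v w, f v = f w -> v = w;
  connected : forall v w, reach isE tl hd v w;
  loc_finite : forall v, exists L : list nat, forall j, In j L <-> incident isE tl hd v j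
}.

Arguments isE {V}. Arguments tl {V}. Arguments hd {V}. Arguments len {V}.

Section Net.
Context {V : Type} (G : Network V).

Definition N (v : V) (j : nat) : Prop := incident (isE G) (tl G) (hd G) v j.

Definition ramification (v : V) : Prop :=
  exists j k, j <> k /\ N v j /\ N v k.

Definition sink (v : V) : Prop := forall j, N v j -> hd G j = v.
Definition source (v : V) : Prop := forall j, N v j -> tl G j = v.

Definition iota (v : V) (j : nat) : R :=
  if xm (hd G j = v) then 1 else if xm (tl G j = v) then -1 else 0.

(** arc-length coordinate of vertex v on edge j, i.e. π_j^{-1}(v) *)
Definition vpos (v : V) (j : nat) : R :=
  if xm (hd G j = v) then len G j else 0.

End Net.

Definition dx (u : R -> R -> R) : R -> R -> R := fun x t => Derive (fun y => u y t) x.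
Definition dt (u : R -> R -> R) : R -> R -> R := fun x t => Derive (fun s => u x s) t.

Fixpoint sumR (L : list nat) (f : nat -> R) : R :=
  match L with nil => 0 | j :: L' => f j + sumR L' f end.

Definition strong_solution {V : Type} (G : Network V) (a b d : nat -> R)
    (u : nat -> R -> R -> R) : Prop :=
  (forall i x t, isE G i -> 0 <= x <= len G i -> 0 < t ->
     dt (u i) x t - a i * dx (dx (dt (u i))) x t
       + b i * u i x t * dx (u i) x t + d i * dx (u i) x t = 0) /\
  (forall v, ramification G v -> forall j k t, N G v j -> N G v k -> 0 <= t ->
     u j (vpos G v j) t = u k (vpos G v k) t) /\
  (forall v, ramification G v -> forall (L : list nat), NoDup L ->
     (forall j, In j L <-> N G v j) -> forall t, 0 <= t ->
     sumR L (fun j => iota G v j * a j * dx (u j) (vpos G v j) t) = 0).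

Definition C3 (f : R -> R) : Prop :=
  (forall x, ex_derive_n f 1 x /\ ex_derive_n f 2 x /\ ex_derive_n f 3 x) /\
  (forall x, continuous (Derive_n f 3) x).

Definition tw (phi : nat -> R -> R) (c : nat -> R) : nat -> R -> R -> R :=
  fun i x t => phi i (x - c i * t).

Definition travelling_wave {V : Type} (G : Network V) (a b d : nat -> R)
    (phi : nat -> R -> R) (c : nat -> R) : Prop :=
  (forall i, isE G i -> 0 <= c i /\ C3 (phi i)) /\
  strong_solution G a b d (tw phi c).

Definition constant_on_G {V : Type} (G : Network V) (u : nat -> R -> R -> R) : Prop :=
  exists C, forall i x t, isE G i -> 0 <= x <= len G i -> 0 <= t -> u i x t = C.

(* Main.v *)
Require Import Defs.
From Stdlib Require Import Reals Lra Classical.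
From Stdlib Require List.
From Coquelicot Require Import Coquelicot.
Open Scope R_scope.
Lemma Derive_shift (f : R -> R) k x : (forall y, ex_derive f y) ->
  Derive (fun y => f (y - k)) x = Derive f (x - k).
Proof.
  intros Hf. apply is_derive_unique.
  assert (H := is_derive_comp f (fun y => y - k) x (Derive f (x - k)) 1 (Derive_correct _ _ (Hf _))).
  assert (H2 : is_derive (fun y : R => y - k) x 1) by (auto_derive; auto; ring).
  specialize (H H2). unfold scal in H; simpl in H; unfold mult in H; simpl in H.
  rewrite Rmult_1_l in H. exact H.
Qed.

Lemma Derive_tshift (f : R -> R) c x t : (forall y, ex_derive f y) ->
  Derive (fun s => f (x - c * s)) t = - c * Derive f (x - c * t).
Proof.
  intros Hf. apply is_derive_unique.
  assert (H := is_derive_comp f (fun s => x - c * s) t (Derive f (x - c * t)) (-c) (Derive_correct _ _ (Hf _))).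
  assert (H2 : is_derive (fun s : R => x - c * s) t (-c)) by (auto_derive; auto; ring).
  specialize (H H2). unfold scal in H; simpl in H; unfold mult in H; simpl in H. exact H.
Qed.

Lemma locally_lt y l : y < l -> locally y (fun z => z < l).
Proof.
  intros H. assert (Hp : 0 < l - y) by lra. exists (mkposreal _ Hp).
  intros z Hz. unfold ball in Hz; simpl in Hz. unfold AbsRing_ball, abs, minus, plus, opp in Hz; simpl in Hz.
  apply Rabs_lt_between' in Hz. lra.
Qed.

Lemma locally_gt y l : l < y -> locally y (fun z => l < z).
Proof.
  intros H. assert (Hp : 0 < y - l) by lra. exists (mkposreal _ Hp).
  intros z Hz. unfold ball in Hz; simpl in Hz. unfold AbsRing_ball, abs, minus, plus, opp in Hz; simpl in Hz.
  apply Rabs_lt_between' in Hz. lra.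
Qed.

Lemma zero_deriv (f : R -> R) p : (forall x, ex_derive f x) ->
  (forall x, x < p -> Derive f x = 0) -> forall s, s <= p -> f s = f p.
Proof.
  intros Hf H0 s Hs. destruct (Req_dec s p) as [->|Hne]; [reflexivity|].
  destruct (MVT_cor2 f (Derive f) s p) as [e [He1 He2]]; [lra| |].
  - intros e _. apply is_derive_Reals. apply Derive_correct. apply Hf.
  - rewrite H0 in He1 by lra. lra.
Qed.
Lemma ineq y u w q Q : q^2 <= Q -> 2*y*u + 2*u*w + 2*w*(-(q*u)) <= (3+Q)*(y^2+u^2+w^2).
Proof. intros H.
 pose proof (pow2_ge_0 (y-u)) as A1. pose proof (pow2_ge_0 (u-w)) as A2. pose proof (pow2_ge_0 (q*w+u)) as A3.
 replace ((y-u)^2) with (y^2 - 2*y*u + u^2) in A1 by ring.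
 replace ((u-w)^2) with (u^2 - 2*u*w + w^2) in A2 by ring.
 replace ((q*w+u)^2) with (q^2*w^2 + 2*w*(q*u) + u^2) in A3 by ring.
 pose proof (pow2_ge_0 q). pose proof (pow2_ge_0 w). pose proof (pow2_ge_0 y). pose proof (pow2_ge_0 u).
 assert (0<=Q) by lra. assert (q^2*w^2 <= Q*w^2) by (apply Rmult_le_compat_r; lra).
 assert (0 <= Q*y^2) by (apply Rmult_le_pos; lra). assert (0 <= Q*u^2) by (apply Rmult_le_pos; lra).
 nra. Qed.

Lemma ode_ext (f : R -> R) alpha beta delta C l :
 alpha <> 0 -> (forall x, ex_derive f x) -> (forall x, ex_derive (Derive f) x) ->
 (forall x, ex_derive (Derive (Derive f)) x) ->
 (forall x, x < l -> alpha * Derive (Derive (Derive f)) x + (beta * f x + delta) * Derive f x = 0) ->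
 (forall x, x <= 0 -> f x = C) -> 0 < l -> forall x, x <= l -> f x = C.
Proof.
  intros Ha H1 H2 H3 Hode H0 Hl.
  assert (S1 : forall y, y < 0 -> Derive f y = 0).
  { intros y Hy. rewrite (Derive_ext_loc f (fun _ => C)). apply Derive_const.
    eapply filter_imp; [|apply (locally_lt y 0 Hy)]. intros z Hz; simpl. apply H0; lra. }
  assert (S2 : forall y, y < 0 -> Derive (Derive f) y = 0).
  { intros y Hy. rewrite (Derive_ext_loc (Derive f) (fun _ => 0)). apply Derive_const.
    eapply filter_imp; [|apply (locally_lt y 0 Hy)]. intros z Hz; simpl. apply S1; lra. }
  assert (Key : forall x0, -1 < x0 < l -> f x0 = C /\ Derive f x0 = 0).
  { intros x0 Hx0.
    set (g := fun x => ((beta * f x + delta) / alpha) ^ 2).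
    destruct (continuity_ab_maj g (-1) x0) as [Mx [HM _]]; [lra| |].
    { intros c0 _. apply continuity_pt_filterlim. apply (ex_derive_continuous (K:=R_AbsRing) (V:=R_NormedModule)).
      unfold g. auto_derive. repeat split; auto. }
    set (Q := g Mx). set (K := 3 + Q).
    set (E := fun x => (f x - C)^2 + (Derive f x)^2 + (Derive (Derive f) x)^2).
    set (F := fun x => E x * exp (-(K*x))).
    set (dF := fun x => (2*(f x - C)*Derive f x + 2*Derive f x*Derive (Derive f) x
                + 2*Derive (Derive f) x*Derive (Derive (Derive f)) x) * exp (-(K*x))
                - K * E x * exp (-(K*x))).
    assert (HdF : forall x, is_derive F x (dF x)).
    { intros x. unfold F, E, dF. auto_derive. repeat split; auto. unfold E. change (fun x1 : R => f x1) with f. change (fun x1 : R => Derive f x1) with (Derive f). change (fun x1 : R => Derive (Derive f) x1) with (Derive (Derive f)). ring. }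
    assert (Hneg : forall x, -1 <= x <= x0 -> dF x <= 0).
    { intros x Hx. unfold dF.
      assert (Hq : Derive (Derive (Derive f)) x = - ((beta * f x + delta) / alpha * Derive f x)).
      { specialize (Hode x ltac:(lra)). field_simplify_eq; [|exact Ha]. lra. }
      rewrite Hq.
      assert (HgQ : ((beta * f x + delta) / alpha)^2 <= Q) by (apply (HM x Hx)).
      pose proof (ineq (f x - C) (Derive f x) (Derive (Derive f) x) _ _ HgQ) as Hi.
      pose proof (exp_pos (-(K*x))).
      assert (Hk : K * E x = (3+Q) * ((f x - C)^2 + (Derive f x)^2 + (Derive (Derive f) x)^2)) by reflexivity.
      rewrite Hk. rewrite <- Rmult_minus_distr_r. apply Rmult_le_0_r; [|lra]. lra. }
    assert (F0 : F (-1) = 0).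
    { unfold F, E. rewrite H0, S1, S2 by lra. ring. }
    assert (FE : F x0 <= 0).
    { destruct (MVT_cor2 F dF (-1) x0) as [e [He1 He2]]; [lra| |].
      - intros e _. apply is_derive_Reals. apply HdF.
      - rewrite F0 in He1. assert (dF e <= 0) by (apply Hneg; lra).
        assert (dF e * (x0 - -1) <= 0) by (apply Rmult_le_0_r; lra). lra. }
    unfold F, E in FE. pose proof (exp_pos (-(K*x0))).
    assert (HE : (f x0 - C)^2 + (Derive f x0)^2 + (Derive (Derive f) x0)^2 <= 0).
    { destruct (Rle_dec ((f x0 - C)^2 + (Derive f x0)^2 + (Derive (Derive f) x0)^2) 0); auto.
      assert (0 < ((f x0 - C)^2 + (Derive f x0)^2 + (Derive (Derive f) x0)^2) * exp (-(K*x0)))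
        by (apply Rmult_lt_0_compat; lra). lra. }
    pose proof (pow2_ge_0 (f x0 - C)). pose proof (pow2_ge_0 (Derive f x0)).
    pose proof (pow2_ge_0 (Derive (Derive f) x0)).
    split.
    - assert ((f x0 - C)^2 = 0) by lra. destruct (Req_dec (f x0 - C) 0) as [Hz|Hz]; [lra|]; exfalso; apply (pow_nonzero _ 2 Hz); lra.
    - assert ((Derive f x0)^2 = 0) by lra. destruct (Req_dec (Derive f x0) 0) as [Hz|Hz]; [lra|]; exfalso; apply (pow_nonzero _ 2 Hz); lra. }
  assert (S3 : forall x, x < l -> Derive f x = 0).
  { intros x Hx. destruct (Rlt_dec (-1) x). apply Key; lra. apply S1; lra. }
  intros x Hx. rewrite (zero_deriv f l H1 S3 x Hx).
  rewrite <- (zero_deriv f l H1 S3 (-1)) by lra. apply H0; lra.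
Qed.

Lemma sumR_ext L f g : (forall j, List.In j L -> f j = g j) -> sumR L f = sumR L g.
Proof. induction L; simpl; intros H; auto. rewrite H by auto. rewrite IHL; auto. Qed.
Lemma sumR_scal L f k : sumR L (fun j => k * f j) = k * sumR L f.
Proof. induction L; simpl. ring. rewrite IHL. ring. Qed.
Lemma sumR_nonneg L f : (forall j, List.In j L -> 0 <= f j) -> 0 <= sumR L f.
Proof. induction L; simpl; intros H. lra. assert (0 <= f a) by auto. assert (0 <= sumR L f) by auto. lra. Qed.
Lemma sumR_pos L f j0 : List.In j0 L -> (forall j, List.In j L -> 0 < f j) -> 0 < sumR L f.
Proof. induction L; simpl; intros Hi H. destruct Hi.
  assert (0 < f a) by auto. assert (0 <= sumR L f) by (apply sumR_nonneg; intros; left; auto). lra. Qed.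

Lemma tw_dx phi c i x t : (forall y, ex_derive (phi i) y) ->
  dx (tw phi c i) x t = Derive (phi i) (x - c i * t).
Proof. intros H. unfold dx, tw. apply Derive_shift; auto. Qed.

Lemma tw_dt phi c i x t : (forall y, ex_derive (phi i) y) ->
  dt (tw phi c i) x t = - c i * Derive (phi i) (x - c i * t).
Proof. intros H. unfold dt, tw. apply Derive_tshift; auto. Qed.

Lemma tw_dxxt phi c i x t : C3 (phi i) ->
  dx (dx (dt (tw phi c i))) x t = - c i * Derive (Derive (Derive (phi i))) (x - c i * t).
Proof.
  intros [H _].
  assert (H1 : forall y, ex_derive (phi i) y) by (intro y; apply (H y)).
  assert (H2 : forall y, ex_derive (Derive (phi i)) y) by (intro y; apply (H y)).
  assert (H3 : forall y, ex_derive (Derive (Derive (phi i))) y) by (intro y; apply (H y)).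
  assert (E1 : forall y, dx (dt (tw phi c i)) y t = - c i * Derive (Derive (phi i)) (y - c i * t)).
  { intros y. unfold dx at 1.
    rewrite (Derive_ext _ (fun z => - c i * Derive (phi i) (z - c i * t))) by (intro; apply tw_dt; auto).
    rewrite Derive_scal. rewrite Derive_shift; auto. }
  unfold dx at 1. rewrite (Derive_ext _ _ _ E1). rewrite Derive_scal. rewrite Derive_shift; auto.
Qed.

Theorem lemma3p6 (V : Type) (G : Network V) (a b d c : nat -> R) (phi : nat -> R -> R) :
  (forall i, isE G i -> 0 < a i) ->
  (forall i, isE G i -> b i <> 0) ->
  travelling_wave G a b d phi c ->
  ~ constant_on_G G (tw phi c) ->
  (forall i, isE G i -> 0 < c i) ->
  forall v : V, ramification G v -> ~ sink G v /\ ~ source G v.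
Proof.
  intros Ha Hb [Htw Hsol] Hnc Hc v Hram.
  destruct Hsol as [Heq [Hcont Hkir]].
  assert (C3i : forall i, isE G i -> C3 (phi i)) by (intros i Hi; apply Htw; auto).
  assert (D1e : forall i, isE G i -> forall y, ex_derive (phi i) y)
    by (intros i Hi y; destruct (C3i i Hi) as [H _]; apply (H y)).
  assert (D2e : forall i, isE G i -> forall y, ex_derive (Derive (phi i)) y)
    by (intros i Hi y; destruct (C3i i Hi) as [H _]; apply (H y)).
  assert (D3e : forall i, isE G i -> forall y, ex_derive (Derive (Derive (phi i))) y)
    by (intros i Hi y; destruct (C3i i Hi) as [H _]; apply (H y)).
  assert (Hode : forall i, isE G i -> forall s, s < len G i ->
     a i * c i * Derive (Derive (Derive (phi i))) s + (b i * phi i s + (d i - c i)) * Derive (phi i) s = 0).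
  { intros i Hi s Hs. pose proof (Hc i Hi) as Hci. pose proof (len_pos _ G i Hi).
    set (t := (len G i - s) / c i).
    assert (Ht : 0 < t) by (unfold t; apply Rdiv_lt_0_compat; lra).
    assert (Hxs : len G i - c i * t = s) by (unfold t; field; lra).
    specialize (Heq i (len G i) t Hi ltac:(lra) Ht).
    rewrite tw_dt, tw_dxxt, tw_dx in Heq by auto. unfold tw in Heq. rewrite Hxs in Heq. lra. }
  assert (Hvp : forall w k, isE G k -> 0 <= vpos G w k <= len G k).
  { intros w k Hk. pose proof (len_pos _ G k Hk). unfold vpos. destruct (xm (hd G k = w)); lra. }
  assert (Ext : forall k w C, isE G k -> (tl G k = w \/ hd G k = w) ->
      (forall s, s <= vpos G w k -> phi k s = C) -> forall s, s <= len G k -> phi k s = C).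
  { intros k w C Hk Hw H s Hs. unfold vpos in H. destruct (xm (hd G k = w)) as [Hh|Hh].
    - apply H; auto.
    - pose proof (Hc k Hk). pose proof (Ha k Hk).
      apply (ode_ext (phi k) (a k * c k) (b k) (d k - c k) C (len G k)); auto.
      + apply Rgt_not_eq. apply Rmult_lt_0_compat; lra.
      + apply len_pos; auto. }
  assert (Prp : forall w C, ramification G w ->
      (exists j, Defs.N G w j /\ forall s, s <= len G j -> phi j s = C) ->
      forall k, Defs.N G w k -> forall s, s <= len G k -> phi k s = C).
  { intros w C Hw [j [Hj Hgj]] k [Hk Hkw].
    apply (Ext k w C Hk); [destruct Hkw; auto|].
    intros s Hs. pose proof (Hc k Hk) as Hck. destruct Hj as [Hj Hjw].
    set (t := (vpos G w k - s) / c k).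
    assert (Ht : 0 <= t) by (unfold t; apply Rmult_le_pos; [lra| left; apply Rinv_0_lt_compat; lra]).
    assert (Hxs : vpos G w k - c k * t = s) by (unfold t; field; lra).
    pose proof (Hcont w Hw k j t (conj Hk Hkw) (conj Hj Hjw) Ht) as Hct. unfold tw in Hct.
    rewrite Hxs in Hct. rewrite Hct. apply Hgj.
    pose proof (Hvp w j Hj). pose proof (Hc j Hj). assert (0 <= c j * t) by (apply Rmult_le_pos; lra). lra. }
  assert (Base : forall sg, sg <> 0 -> (forall j, Defs.N G v j -> Defs.iota G v j = sg) ->
     exists C, forall k, Defs.N G v k -> forall s, s <= len G k -> phi k s = C).
  { intros sg Hsg Hio.
    pose proof Hram as [j0 [k0 [_ [Hj0 _]]]].
    destruct Hj0 as [Hj0E Hj0v].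
    set (p0 := vpos G v j0). exists (phi j0 p0).
    apply (Prp v); auto. exists j0. split; [split; auto|].
    apply (Ext j0 v); [exact Hj0E | destruct Hj0v; auto | ].
    fold p0. apply zero_deriv; [apply D1e; auto|].
    intros s Hs. pose proof (Hc j0 Hj0E) as Hc0.
    set (t := (p0 - s) / c j0).
    assert (Ht : 0 < t) by (unfold t; apply Rdiv_lt_0_compat; lra).
    assert (Hxs : p0 - c j0 * t = s) by (unfold t; field; lra).
    destruct (loc_finite _ G v) as [L0 HL0].
    set (L := List.nodup Nat.eq_dec L0).
    assert (HL : forall j, List.In j L <-> Defs.N G v j).
    { intros j. unfold L. rewrite List.nodup_In. apply HL0. }
    pose proof (Hkir v Hram L (List.NoDup_nodup _ _) HL t ltac:(lra)) as HK.
    assert (Rel : forall j, Defs.N G v j -> Derive (phi j) (vpos G v j - c j * t) = c j0 / c j * Derive (phi j0) s).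
    { intros j Hj. pose proof Hj as [HjE Hjv]. pose proof (Hc j HjE).
      assert (HD : Derive (fun r => phi j (vpos G v j - c j * r)) t = Derive (fun r => phi j0 (p0 - c j0 * r)) t).
      { apply Derive_ext_loc. eapply filter_imp; [|apply (locally_gt t 0 Ht)].
        intros r Hr. apply (Hcont v Hram j j0 r Hj (conj Hj0E Hj0v)). lra. }
      rewrite !Derive_tshift in HD by (apply D1e; auto). rewrite Hxs in HD.
      field_simplify_eq; [|lra]. lra. }
    rewrite (sumR_ext L _ (fun j => (sg * Derive (phi j0) s) * (a j * (c j0 / c j)))) in HK.
    2:{ intros j Hj. apply HL in Hj. rewrite Hio, tw_dx, Rel by (auto; apply D1e; apply Hj). ring. }
    rewrite sumR_scal in HK.
    assert (Hpos : 0 < sumR L (fun j => a j * (c j0 / c j))).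
    { apply (sumR_pos L _ j0). apply HL; split; auto.
      intros j Hj. apply HL in Hj. destruct Hj as [HjE _]. pose proof (Ha j HjE). pose proof (Hc j HjE).
      apply Rmult_lt_0_compat; auto. apply Rdiv_lt_0_compat; auto. }
    apply Rmult_integral in HK. destruct HK as [HK|HK]; [|lra].
    apply Rmult_integral in HK. destruct HK; [contradiction|auto]. }
  assert (Fin : forall C, (forall k, Defs.N G v k -> forall s, s <= len G k -> phi k s = C) -> False).
  { intros C HC. apply Hnc. exists C.
    assert (R : forall w, reach (isE G) (tl G) (hd G) v w ->
              forall k, Defs.N G w k -> forall s, s <= len G k -> phi k s = C).
    { intros w Hr. induction Hr as [|w w' Hr IH Hadj]; auto.
      destruct Hadj as [j [HjE Hjw]].
      assert (Hgj : forall s, s <= len G j -> phi j s = C).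
      { apply IH. split; auto. destruct Hjw as [[? ?]|[? ?]]; auto. }
      assert (Njw' : Defs.N G w' j) by (split; auto; destruct Hjw as [[? ?]|[? ?]]; auto).
      intros k Hk. destruct (classic (ramification G w')) as [Hr'|Hr'].
      - apply (Prp w' C Hr'); auto. exists j; auto.
      - destruct (Nat.eq_dec k j) as [->|Hkj]; auto.
        exfalso. apply Hr'. exists k, j. auto. }
    intros i x t Hi Hx Ht. unfold tw.
    apply (R (tl G i)); [apply connected| split; auto|].
    pose proof (Hc i Hi). assert (0 <= c i * t) by (apply Rmult_le_pos; lra). lra. }
  split.
  - intros Hsk. destruct (Base 1 ltac:(lra)) as [C HC]; [|exact (Fin C HC)].
    intros j Hj. unfold Defs.iota. destruct (xm (hd G j = v)) as [e|e]; [reflexivity | exfalso; apply e; apply Hsk; exact Hj].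
  - intros Hsk. destruct (Base (-1) ltac:(lra)) as [C HC]; [|exact (Fin C HC)].
    intros j Hj. pose proof (Hsk j Hj) as Ht. destruct Hj as [HjE _].
    unfold Defs.iota. destruct (xm (hd G j = v)) as [Hh|Hh].
    + exfalso. apply (no_loop _ G j HjE). congruence.
    + destruct (xm (tl G j = v)); [reflexivity|contradiction].
Qed.
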